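(* Let $S=\{x\in\mathbb{R}^n\mid h_i^Tx\le b_i,\ i=1,\dots,r\}$ be a polyhedron, let $q:\mathbb{R}^{n\times n}\to\mathbb{R}$ be a strictly convex quadratic function and $U_0=\{A\in\mathbb{R}^{n\times n}\mid q(A)\le 0\}$, let $A_\star\in U_0$, let $x_1,\dots,x_k\in\mathbb{R}^n$, let $U_k=\{A\in U_0\mid Ax_j=A_\star x_j,\ A^2x_j=A_\star^2x_j,\ j=1,\dots,k\}$, and let $c\in\mathbb{R}^n$. Then the problem $$\min_{x\in\mathbb{R}^n} c^Tx\quad\text{s.t. } x\in S,\quad Ax\in S\ \ \forall A\in U_k,\quad A^2x\in S\ \ \forall A\in U_k$$ can be reformulated as a semidefinite program involving $3r$ scalar inequalities and $2r$ positive semidefinite constraints on matrices of size at most $(n^2+1)\times(n^2+1)$.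
   Context: Setting: the unknown linear system $x_{t+1}=A_\star x_t$ with ellipsoidal uncertainty set $U_0$; the data are $k$ observed length-two trajectories $(x_j,A_\star x_j,A_\star^2x_j)$. The feasible set of the displayed problem is the set of points that remain in $S$ for two steps under every matrix consistent with $U_0$ and the data. *)

(* Defs.v *)
From HB Require Import structures.
From mathcomp Require Import all_boot all_order all_algebra.
From mathcomp Require Import reals.
Set Implicit Arguments. Unset Strict Implicit. Unset Printing Implicit Defensive.
Import Order.TTheory GRing.Theory Num.Theory.
Local Open Scope ring_scope.

Section Defs.
Variable R : realType.

Definition in_poly (n r : nat) (h : 'I_r -> 'cV[R]_n) (b : 'I_r -> R)
    (x : 'cV[R]_n) : Prop :=
  forall i : 'I_r, ((h i)^T *m x) 0 0 <= b i.

Definition quad_fun (n : nat) (Q : 'M[R]_(n * n)) (p : 'cV[R]_(n * n)) (s : R)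
    (A : 'M[R]_n) : R :=
  (mxvec A *m Q *m (mxvec A)^T) 0 0 + (mxvec A *m p) 0 0 + s.

(* Strict convexity of quad_fun Q p s: positive definite quadratic part. *)
Definition pos_def (m : nat) (Q : 'M[R]_m) : Prop :=
  forall v : 'rV[R]_m, v != 0 -> 0 < (v *m Q *m v^T) 0 0.

Definition in_Uk (n k : nat) (q : 'M[R]_n -> R) (Astar : 'M[R]_n)
    (xs : 'I_k -> 'cV[R]_n) (A : 'M[R]_n) : Prop :=
  q A <= 0 /\
  forall j : 'I_k, A *m xs j = Astar *m xs j /\
                   A *m (A *m xs j) = Astar *m (Astar *m xs j).

Definition robust_feasible (n r k : nat) (h : 'I_r -> 'cV[R]_n) (b : 'I_r -> R)
    (q : 'M[R]_n -> R) (Astar : 'M[R]_n) (xs : 'I_k -> 'cV[R]_n)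
    (x : 'cV[R]_n) : Prop :=
  in_poly h b x /\
  forall A : 'M[R]_n, in_Uk q Astar xs A ->
    in_poly h b (A *m x) /\ in_poly h b (A *m (A *m x)).

Definition psd (m : nat) (M : 'M[R]_m) : Prop :=
  M^T = M /\ forall v : 'cV[R]_m, 0 <= (v^T *m M *m v) 0 0.

(* A semidefinite program in the variables (x, y), x : 'cV_n, y : 'cV_N
   (N auxiliary variables), with nineq scalar affine inequalities and
   nlmi linear matrix inequalities, the j-th one of size sdp_m j. *)
Record SDP (n nineq nlmi : nat) := {
  sdp_N : nat;
  sdp_m : 'I_nlmi -> nat;
  sdp_ax : 'I_nineq -> 'rV[R]_n;
  sdp_ay : 'I_nineq -> 'rV[R]_sdp_N;
  sdp_e : 'I_nineq -> R;
  sdp_F0 : forall j : 'I_nlmi, 'M[R]_(sdp_m j);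
  sdp_Fx : forall j : 'I_nlmi, 'I_n -> 'M[R]_(sdp_m j);
  sdp_Fy : forall j : 'I_nlmi, 'I_sdp_N -> 'M[R]_(sdp_m j);
  sdp_cx : 'rV[R]_n;     (* objective: sdp_cx x + sdp_cy y *)
  sdp_cy : 'rV[R]_sdp_N
}.

Arguments sdp_F0 {n nineq nlmi} s j : rename.
Arguments sdp_Fx {n nineq nlmi} s j k : rename.
Arguments sdp_Fy {n nineq nlmi} s j l : rename.
Arguments sdp_ax {n nineq nlmi} s i : rename.
Arguments sdp_ay {n nineq nlmi} s i : rename.
Arguments sdp_e {n nineq nlmi} s i : rename.
Arguments sdp_m {n nineq nlmi} s j : rename.

Definition sdp_lmi n nineq nlmi (P : SDP n nineq nlmi) (j : 'I_nlmi)
    (x : 'cV[R]_n) (y : 'cV[R]_(sdp_N P)) : 'M[R]_(sdp_m P j) :=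
  sdp_F0 P j + \sum_(k < n) x k 0 *: sdp_Fx P j k
             + \sum_(l < sdp_N P) y l 0 *: sdp_Fy P j l.

Definition sdp_feasible n nineq nlmi (P : SDP n nineq nlmi)
    (x : 'cV[R]_n) (y : 'cV[R]_(sdp_N P)) : Prop :=
  (forall i : 'I_nineq, (sdp_ax P i *m x) 0 0 + (sdp_ay P i *m y) 0 0 <= sdp_e P i)
  /\ (forall j : 'I_nlmi, psd (@sdp_lmi _ _ _ P j x y)).

Definition sdp_reformulates n nineq nlmi (P : SDP n nineq nlmi)
    (c : 'cV[R]_n) (F : 'cV[R]_n -> Prop) : Prop :=
  sdp_cx P = c^T /\ sdp_cy P = 0 /\
  forall x : 'cV[R]_n, F x <-> exists y, @sdp_feasible _ _ _ P x y.

End Defs.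

(* Main.v *)
Require Import Defs.
From HB Require Import structures.
From mathcomp Require Import all_boot all_order all_algebra.
From mathcomp Require Import reals.
From mathcomp Require Import boolp classical_sets.
From mathcomp Require Import ring lra.
Import Order.TTheory GRing.Theory Num.Theory.
Set Implicit Arguments. Unset Strict Implicit. Unset Printing Implicit Defensive.
Local Open Scope ring_scope.


Lemma addE (R : realType) m n (A B : 'M[R]_(m,n)) i j : (A + B) i j = A i j + B i j.
Proof. by rewrite mxE. Qed.
Lemma scaleE (R : realType) m n c (A : 'M[R]_(m,n)) i j : (c *: A) i j = c * A i j.
Proof. by rewrite mxE. Qed.
Lemma oppE (R : realType) m n (A : 'M[R]_(m,n)) i j : (- A) i j = - A i j.
Proof. by rewrite mxE. Qed.

Definition qf (R : realType) m (M : 'M[R]_m) (v : 'cV[R]_m) : R := (v^T *m M *m v) 0 0.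
Definition bf (R : realType) m (M : 'M[R]_m) (u w : 'cV[R]_m) : R := (u^T *m M *m w) 0 0.

Lemma qf_lin2 (R : realType) m (M : 'M[R]_m) u w a c :
  qf M (a *: u + c *: w) = a^+2 * qf M u + a * c * (bf M u w + bf M w u) + c^+2 * qf M w.
Proof.
rewrite /qf /bf.
have -> : (a *: u + c *: w)^T = a *: u^T + c *: w^T by rewrite linearD /= !linearZ.
rewrite !(mulmxDl, mulmxDr) -!(scalemxAl, scalemxAr) !(addE, scaleE). ring.
Qed.

Lemma qf_scale_v (R : realType) m (M : 'M[R]_m) v a : qf M (a *: v) = a^+2 * qf M v.
Proof. have := qf_lin2 M v 0 a 0. rewrite !scale0r !addr0. move=> ->. ring. Qed.

Lemma qf_add (R : realType) m (M1 M2 : 'M[R]_m) v : qf (M1 + M2) v = qf M1 v + qf M2 v.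
Proof. by rewrite /qf mulmxDr mulmxDl addE. Qed.
Lemma qf_scale (R : realType) m (M : 'M[R]_m) c v : qf (c *: M) v = c * qf M v.
Proof. by rewrite /qf -scalemxAr -scalemxAl scaleE. Qed.
Lemma qf_opp (R : realType) m (M : 'M[R]_m) v : qf (- M) v = - qf M v.
Proof. by rewrite -scaleN1r qf_scale mulN1r. Qed.
Lemma qf0 (R : realType) m (v : 'cV[R]_m) : qf 0 v = 0.
Proof. by rewrite /qf mulmx0 mul0mx mxE. Qed.
Lemma qf_sum (R : realType) m I (r : seq I) (P : pred I) (F : I -> 'M[R]_m) v :
  qf (\sum_(i <- r | P i) F i) v = \sum_(i <- r | P i) qf (F i) v.
Proof.
apply: (big_ind2 (fun M a => qf M v = a)); first exact: qf0.
by move=> x1 x2 y1 y2 <- <-; rewrite qf_add.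
by [].
Qed.
Lemma qf_tr (R : realType) m (M : 'M[R]_m) v : qf M^T v = qf M v.
Proof.
rewrite /qf.
have -> : v^T *m M^T *m v = (v^T *m M *m v)^T by rewrite !trmx_mul trmxK mulmxA.
by rewrite mxE.
Qed.
Definition symm (R : realType) m (M : 'M[R]_m) : 'M[R]_m := 2^-1 *: (M + M^T).
Lemma symm_tr (R : realType) m (M : 'M[R]_m) : (symm M)^T = symm M.
Proof. by rewrite /symm linearZ /= linearD /= trmxK addrC. Qed.
Lemma qf_symm (R : realType) m (M : 'M[R]_m) v : qf (symm M) v = qf M v.
Proof. rewrite /symm qf_scale qf_add qf_tr. lra. Qed.
Lemma zeroE (R : realType) m n i j : (0 : 'M[R]_(m,n)) i j = 0.
Proof. by rewrite mxE. Qed.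


Lemma two_point (R : realType) m (F G : 'M[R]_m) :
  (forall v, qf G v <= 0 -> 0 <= qf F v) ->
  forall v1 v2, 0 < qf G v1 -> qf G v2 < 0 ->
  0 <= qf F v1 * (- qf G v2) + qf F v2 * qf G v1.
Proof.
move=> H v1 v2 h1 h2.
set F1 := qf F v1; set F2 := qf F v2; set al := qf G v1.
set be := - qf G v2.
have hbe : 0 < be by rewrite /be oppr_gt0.
set ga := bf G v1 v2 + bf G v2 v1; set ph := bf F v1 v2 + bf F v2 v1.
have hpos : 0 <= ga ^+ 2 + 4 * al * be.
  have : 0 <= ga ^+ 2 by exact: sqr_ge0.
  have : 0 < al * be by exact: mulr_gt0.
  nra.
set D := Num.sqrt (ga ^+ 2 + 4 * al * be).
have hD : D ^+ 2 = ga ^+ 2 + 4 * al * be by rewrite sqr_sqrtr.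
have hD0 : 0 <= D by exact: sqrtr_ge0.
have hab : 0 < al * be by exact: mulr_gt0.
have hDp : 0 < D.
  rewrite lt_neqAle hD0 andbT; apply/eqP => hD0'.
  move: hD; rewrite -hD0' expr0n /=. have : 0 <= ga ^+ 2 by exact: sqr_ge0. nra.
have hDg1 : ga <= D by nra.
have hDg2 : - ga <= D by nra.
have key : forall s, s ^+ 2 + 2 * ga * s - 4 * al * be = 0 ->
    0 <= s ^+ 2 * F1 + s * (2 * al) * ph + (2 * al) ^+ 2 * F2.
  move=> s hs.
  have := H (s *: v1 + (2 * al) *: v2).
  rewrite !qf_lin2 -/F1 -/F2 -/al -/ga -/ph.
  move=> HH; apply: HH.
  have -> : s ^+ 2 * al + s * (2 * al) * ga + (2 * al) ^+ 2 * qf G v2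
          = al * (s ^+ 2 + 2 * ga * s - 4 * al * be) by rewrite /be; ring.
  by rewrite hs mulr0.
have k1 := key (- ga + D) ltac:(rewrite -[_ - _](subr0) -{2}(subrr (D ^+ 2)) {2}hD; ring).
have k2 := key (- ga - D) ltac:(rewrite -[_ - _](subr0) -{2}(subrr (D ^+ 2)) {2}hD; ring).
have hs1 : 0 <= - ga + D by lra.
have hs2 : 0 <= - (- ga - D) by lra.
have hsum := addr_ge0 (mulr_ge0 hs2 k1) (mulr_ge0 hs1 k2).
have hid : - (- ga - D) * ((- ga + D) ^+ 2 * F1 + (- ga + D) * (2 * al) * ph + (2 * al) ^+ 2 * F2) +
   (- ga + D) * ((- ga - D) ^+ 2 * F1 + (- ga - D) * (2 * al) * ph + (2 * al) ^+ 2 * F2)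
   = 8 * D * al * (F1 * be + F2 * al) + 2 * D * F1 * (D ^+ 2 - (ga ^+ 2 + 4 * al * be)) by ring.
move: hsum; rewrite hid hD subrr mulr0 addr0 => hsum.
have h8 : 0 < 8 * D * al by rewrite !mulr_gt0.
by rewrite -(pmulr_rge0 _ h8).
Qed.

Definition slam (R : realType) m (F G : 'M[R]_m) : R :=
  Num.max 0 (sup (fun x : R => exists v, 0 < qf G v /\ x = - qf F v / qf G v)).

Lemma slemma (R : realType) m (F G : 'M[R]_m) :
  (forall v, qf G v <= 0 -> 0 <= qf F v) -> (exists v0, qf G v0 < 0) ->
  0 <= slam F G /\ forall v, 0 <= qf F v + slam F G * qf G v.
Proof.
move=> H [v0 hv0].
set E := (fun x : R => exists v, 0 < qf G v /\ x = - qf F v / qf G v).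
have bnd : forall v2, qf G v2 < 0 -> ubound E (qf F v2 / (- qf G v2)).
  move=> v2 h2 x [v1 [h1 ->]].
  have tp := two_point H h1 h2.
  have hn : 0 < - qf G v2 by rewrite oppr_gt0.
  rewrite -subr_ge0.
  have -> : qf F v2 / - qf G v2 - - qf F v1 / qf G v1 =
     (qf F v1 * - qf G v2 + qf F v2 * qf G v1) / (qf G v1 * - qf G v2).
    by field; rewrite lt_eqF // gt_eqF.
  by apply: divr_ge0 => //; rewrite mulr_ge0 // ltW.
have ubE : has_ubound E by exists (qf F v0 / (- qf G v0)); exact: bnd.
have supub := ub_le_sup ubE.
split; first by rewrite /slam le_max lexx.
move=> v.
case: (ltrgtP (qf G v) 0) => hG.
- have hF : 0 <= qf F v by apply: H; exact: ltW.
  have hn : 0 < - qf G v by rewrite oppr_gt0.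
  have hl : slam F G <= qf F v / (- qf G v).
    have hq : 0 <= qf F v / - qf G v by rewrite divr_ge0 // ltW.
    rewrite /slam ge_max hq /=.
    case: (pselect (exists x, E x)) => hne.
      apply: ge_sup; [by case: hne => y hy; exists y | exact: bnd].
    rewrite sup_out //.
    by case => -[y hy] _; apply: hne; exists y.
  have : slam F G * (- qf G v) <= qf F v / (- qf G v) * (- qf G v).
    by rewrite ler_wpM2r // ltW.
  rewrite divfK ?gt_eqF //. lra.
- have hin : E (- qf F v / qf G v) by exists v.
  have h1 : - qf F v / qf G v <= slam F G.
    by rewrite /slam le_max (supub _ hin) orbT.
  have : - qf F v / qf G v * qf G v <= slam F G * qf G v by rewrite ler_wpM2r // ltW.
  rewrite divfK ?gt_eqF //. lra.
- by rewrite hG mulr0 addr0; apply: H; rewrite hG.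
Qed.


Lemma quad_lead (R : realType) (a b c : R) :
  (forall s, 0 <= s -> 0 <= a + b * s + c * s ^+ 2) -> 0 <= c.
Proof.
move=> H; rewrite leNgt; apply/negP => hc.
set s := (`|a| + `|b|) / (- c) + 1.
have hab : 0 <= `|a| + `|b| by rewrite addr_ge0.
have hnc : 0 < - c by rewrite oppr_gt0.
have hs1 : 1 <= s by rewrite /s lerDr divr_ge0 // ltW.
have hcs : c * s = - (`|a| + `|b|) + c.
  rewrite /s mulrDr mulr1; congr (_ + _). field. by rewrite lt_eqF.
have := H s (le_trans ler01 hs1).
have ha := ler_norm a. have hb := ler_norm b.
have ha0 := normr_ge0 a. have hb0 := normr_ge0 b.
have : b * s <= `|b| * s by rewrite ler_wpM2r // (le_trans ler01 hs1).
have : `|a| <= `|a| * s by rewrite ler_peMr.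
have -> : c * s ^+ 2 = (c * s) * s by rewrite expr2 mulrA.
rewrite hcs. nra.
Qed.

Lemma ext_hyp (R : realType) m (F G : 'M[R]_(m.+1)) :
  (forall v : 'cV[R]_m.+1, v ord0 0 = 1 -> qf G v <= 0 -> 0 <= qf F v) ->
  (forall w : 'cV[R]_m.+1, w ord0 0 = 0 -> 0 <= qf G w) ->
  (exists v0 : 'cV[R]_m.+1, v0 ord0 0 = 1 /\ qf G v0 < 0) ->
  forall v : 'cV[R]_m.+1, qf G v <= 0 -> 0 <= qf F v.
Proof.
move=> H1 H2 [v0 [hv01 hv0]] v hGv.
have [ht|ht] := eqVneq (v ord0 0) 0.
- have hG0 : qf G v = 0 by apply/eqP; rewrite eq_le hGv H2.
  set ga := bf G v0 v + bf G v v0.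
  set sg : R := if ga <= 0 then 1 else -1.
  have hsg2 : sg ^+ 2 = 1 by rewrite /sg; case: ifP => _; rewrite ?expr1n ?sqrrN ?expr1n.
  have hsgga : sg * ga <= 0.
    rewrite /sg; case: ifP => h; first by rewrite mul1r.
    by rewrite mulN1r oppr_le0 ltW // ltNge h.
  apply: (@quad_lead _ (qf F v0) (sg * (bf F v0 v + bf F v v0))).
  move=> s hs.
  have := H1 (1 *: v0 + (s * sg) *: v).
  rewrite !qf_lin2 hG0 !mxE hv01 ht !mulr0 !addr0 !mulr1 !expr1n !mul1r.
  have -> : (s * sg) ^+ 2 = s ^+ 2 by rewrite exprMn hsg2 mulr1.
  move=> HH.
  have : 0 <= qf F v0 + s * sg * (bf F v0 v + bf F v v0) + s ^+ 2 * qf F v.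
    apply: HH => //.
    have : s * (sg * ga) <= 0 by rewrite mulr_ge0_le0.
    rewrite /ga in hsgga *. nra.
  by move=> h; rewrite [X in _ <= X](_ : _ = qf F v0 + s * sg * (bf F v0 v + bf F v v0) + s ^+ 2 * qf F v) //; ring.
- set t := v ord0 0 in ht.
  have ht2 : 0 < t^-1 ^+ 2 by rewrite exprn_even_gt0 // invr_eq0.
  have := H1 (t^-1 *: v).
  rewrite !qf_scale_v mxE mulVf // => HH.
  have := HH erefl (mulr_ge0_le0 (ltW ht2) hGv).
  by rewrite pmulr_rge0.
Qed.


Definition colf (R : realType) N (f : 'rV[R]_N -> R) : 'cV[R]_N :=
  \col_a f (delta_mx 0 a).

Lemma colfE (R : realType) N (f : 'rV[R]_N -> R) :
  (forall u w, f (u + w) = f u + f w) -> (forall c u, f (c *: u) = c * f u) ->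
  forall u, f u = (u *m colf f) 0 0.
Proof.
move=> fD fZ u.
have f0 : f 0 = 0 by rewrite -(scale0r 0) fZ mul0r.
rewrite {1}(row_sum_delta u).
have -> : f (\sum_(j < N) u 0 j *: delta_mx 0 j) = \sum_(j < N) f (u 0 j *: delta_mx 0 j).
  apply: (big_ind2 (fun M a => f M = a)) => //.
  by move=> x1 x2 y1 y2 <- <-; rewrite fD.
rewrite mxE; apply: eq_bigr => j _; by rewrite fZ mxE.
Qed.

Definition matf (R : realType) N (be : 'rV[R]_N -> 'rV[R]_N -> R) : 'M[R]_N :=
  \matrix_(a, b) be (delta_mx 0 a) (delta_mx 0 b).

Lemma matfE (R : realType) N (be : 'rV[R]_N -> 'rV[R]_N -> R) :
  (forall u1 u2 w, be (u1 + u2) w = be u1 w + be u2 w) ->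
  (forall c u w, be (c *: u) w = c * be u w) ->
  (forall u w1 w2, be u (w1 + w2) = be u w1 + be u w2) ->
  (forall c u w, be u (c *: w) = c * be u w) ->
  forall u w, be u w = (u *m matf be *m w^T) 0 0.
Proof.
move=> hDl hZl hDr hZr u w.
rewrite -mulmxA.
have -> : matf be *m w^T = colf (fun u' => be u' w).
  apply/matrixP => a i; rewrite (ord1 i) !mxE.
  rewrite (@colfE _ _ (be (delta_mx 0 a))) //; rewrite mxE; apply: eq_bigr => j _.
  by rewrite !mxE mulrC.
by apply: colfE.
Qed.


Section App.
Variable R : realType.
Variables n k : nat.
Variable Astar : 'M[R]_n.
Variable xs : 'I_k -> 'cV[R]_n.

Definition Xm : 'M[R]_(n, k + k) :=
  \matrix_(a, j) match split j with inl j' => xs j' a 0 | inr j' => (Astar *m xs j') a 0 end.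
Definition Km : 'M[R]_(n * n) := locked (kermx (lin_mx (mulmxr Xm))).

Lemma inL (D : 'M[R]_n) :
  (forall j, D *m xs j = 0 /\ D *m (Astar *m xs j) = 0) <->
  exists z : 'rV[R]_(n * n), mxvec D = z *m Km.
Proof.
have e1 : (exists z : 'rV[R]_(n * n), mxvec D = z *m Km) <-> D *m Xm = 0.
  split.
    rewrite /Km -lock.
    move=> /submxP; rewrite sub_kermx mul_vec_lin /= => /eqP.
    by move/eqP; rewrite mxvec_eq0 => /eqP.
  move=> h; apply/submxP; rewrite /Km -lock sub_kermx mul_vec_lin /= h.
  by rewrite (_ : mxvec 0 = 0) ?linear0.
rewrite e1; split.
  move=> H; apply/matrixP => a j; rewrite !mxE.
  under eq_bigr do rewrite /Xm mxE.
  case: (splitP j) => j' _.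
    transitivity ((D *m xs j') a 0); last by rewrite (proj1 (H j')) mxE.
    by rewrite mxE.
  transitivity ((D *m (Astar *m xs j')) a 0); last by rewrite (proj2 (H j')) mxE.
  by rewrite mxE.
move=> H j; split; apply/matrixP => a i; rewrite (ord1 i).
  transitivity ((D *m Xm) a (lshift k j)); last by rewrite H !mxE.
  rewrite !mxE; apply: eq_bigr => b _; rewrite /Xm !mxE.
  by have := unsplitK (inl _ j); rewrite /= => ->.
transitivity ((D *m Xm) a (rshift k j)); last by rewrite H !mxE.
rewrite mxE [in RHS]mxE; apply: eq_bigr => b _; rewrite /Xm [in RHS]mxE.
by have := unsplitK (inr _ j); rewrite /= => ->.
Qed.

Lemma inU (q : 'M[R]_n -> R) (A : 'M[R]_n) :
  in_Uk q Astar xs A <->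
  q A <= 0 /\ exists z : 'rV[R]_(n * n), mxvec A = mxvec Astar + z *m Km.
Proof.
have eq1 : (exists z : 'rV[R]_(n * n), mxvec A = mxvec Astar + z *m Km) <->
           (exists z : 'rV[R]_(n * n), mxvec (A - Astar) = z *m Km).
  split=> -[z hz]; exists z.
    by rewrite linearB /= hz addrC addKr.
  by move: hz; rewrite linearB /= => <-; rewrite addrC subrK.
rewrite eq1 -inL /in_Uk; split=> -[hq H]; split=> // j; have [h1 h2] := H j.
  have e : (A - Astar) *m xs j = 0 by rewrite mulmxBl h1 subrr.
  split=> //.
  by rewrite mulmxBl -{1}h1 h2 subrr.
have e : A *m xs j = Astar *m xs j by apply/eqP; rewrite -subr_eq0 -mulmxBl h1.
split=> //.
by rewrite e; apply/eqP; rewrite -subr_eq0 -mulmxBl h2.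
Qed.


Definition Wm : 'M[R]_((n * n).+1, n * n) :=
  \matrix_(i, j) match unlift ord0 i with None => mxvec Astar 0 j | Some i' => Km i' j end.
Definition zz (v : 'cV[R]_((n * n).+1)) : 'rV[R]_(n * n) := \row_i v (lift ord0 i) 0.
Definition mkv (z : 'rV[R]_(n * n)) : 'cV[R]_((n * n).+1) :=
  \col_i match unlift ord0 i with None => 1 | Some i' => z 0 i' end.

Lemma WE v : v^T *m Wm = v ord0 0 *: mxvec Astar + zz v *m Km.
Proof.
apply/matrixP => i j; rewrite (ord1 i) !mxE big_ord_recl /Wm !mxE unlift_none.
congr (_ + _); apply: eq_bigr => l _; by rewrite !mxE liftK.
Qed.

Lemma mkv0 z : mkv z ord0 0 = 1.
Proof. by rewrite /mkv mxE unlift_none. Qed.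
Lemma zz_mkv z : zz (mkv z) = z.
Proof. by apply/matrixP => i j; rewrite (ord1 i) !mxE liftK. Qed.

Definition Av v : 'M[R]_n := vec_mx (v^T *m Wm).

Lemma Av_mkv (A : 'M[R]_n) z : mxvec A = mxvec Astar + z *m Km -> Av (mkv z) = A.
Proof. by move=> h; rewrite /Av WE mkv0 scale1r zz_mkv -h mxvecK. Qed.

Lemma U_Av (q : 'M[R]_n -> R) (v : 'cV[R]_((n * n).+1)) : v ord0 0 = 1 -> q (Av v) <= 0 -> in_Uk q Astar xs (Av v).
Proof.
move=> h1 hq; apply/inU; split=> //; exists (zz v).
by rewrite /Av vec_mxK WE h1 scale1r.
Qed.

Variables (r : nat) (h : 'I_r -> 'cV[R]_n) (b : 'I_r -> R).
Variables (Q : 'M[R]_(n * n)) (p : 'cV[R]_(n * n)) (s : R).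

Implicit Types v : 'cV[R]_((n * n).+1).

Definition ek (kk : 'I_n) : 'cV[R]_n := delta_mx kk 0.

Definition e0 : 'cV[R]_((n * n).+1) := delta_mx ord0 0.

Lemma mx11_mul (A B : 'M[R]_1) : (A *m B) 0 0 = A 0 0 * B 0 0.
Proof. by rewrite mxE big_ord1. Qed.

Lemma e0v (v : 'cV[R]_((n * n).+1)) : (e0^T *m v) 0 0 = v ord0 0.
Proof. by rewrite /e0 trmx_delta -rowE mxE. Qed.
Lemma ve0 (v : 'cV[R]_((n * n).+1)) : (v^T *m e0) 0 0 = v ord0 0.
Proof.
have -> : v^T *m e0 = (e0^T *m v)^T by rewrite trmx_mul trmxK.
by rewrite mxE e0v.
Qed.

Lemma qf_ee (v : 'cV[R]_((n * n).+1)) : qf (e0 *m e0^T) v = v ord0 0 ^+ 2.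
Proof. by rewrite /qf !mulmxA -(mulmxA _ e0^T) mx11_mul ve0 e0v expr2. Qed.

Definition Nq : 'M[R]_((n * n).+1) :=
  Wm *m Q *m Wm^T + Wm *m p *m e0^T + s *: (e0 *m e0^T).

Lemma qf_Nq v : qf Nq v =
  (v^T *m Wm *m Q *m (v^T *m Wm)^T) 0 0 + v ord0 0 * (v^T *m Wm *m p) 0 0
  + v ord0 0 ^+ 2 * s.
Proof.
rewrite /Nq !qf_add qf_scale qf_ee mulrC; congr (_ + _ + _).
  by rewrite /qf trmx_mul trmxK !mulmxA.
by rewrite /qf !mulmxA -(mulmxA _ e0^T) mx11_mul e0v mulrC.
Qed.

Lemma qf_Nq1 v : v ord0 0 = 1 -> qf Nq v = quad_fun Q p s (Av v).
Proof. by move=> h1; rewrite qf_Nq h1 expr1n mul1r mul1r /quad_fun /Av vec_mxK. Qed.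

Lemma qf_Nq0 v : pos_def Q -> v ord0 0 = 0 -> 0 <= qf Nq v.
Proof.
move=> hQ h0; rewrite qf_Nq h0 mul0r expr0n /= mul0r !addr0.
have [->|hne] := eqVneq (v^T *m Wm) 0; first by rewrite !mul0mx zeroE.
exact/ltW/hQ.
Qed.

Definition N0 (i : 'I_r) : 'M[R]_((n * n).+1) := b i *: (e0 *m e0^T).

Definition g1 (i : 'I_r) (kk : 'I_n) : 'cV[R]_(n * n) :=
  colf (fun u : 'rV[R]_(n * n) => ((h i)^T *m (vec_mx u : 'M[R]_n) *m ek kk) 0 0).
Definition N1 (i : 'I_r) (kk : 'I_n) : 'M[R]_((n * n).+1) :=
  - (e0 *m (Wm *m g1 i kk)^T).
Definition b2 (i : 'I_r) (kk : 'I_n) (u w : 'rV[R]_(n * n)) : R :=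
  ((h i)^T *m (vec_mx u : 'M[R]_n) *m (vec_mx w : 'M[R]_n) *m ek kk) 0 0.
Definition N2 (i : 'I_r) (kk : 'I_n) : 'M[R]_((n * n).+1) :=
  - (Wm *m matf (b2 i kk) *m Wm^T).

Lemma qf_N0 i v : qf (N0 i) v = b i * v ord0 0 ^+ 2.
Proof. by rewrite /N0 qf_scale qf_ee. Qed.

Lemma qf_N1 i kk v :
  qf (N1 i kk) v = - (v ord0 0 * ((h i)^T *m Av v *m ek kk) 0 0).
Proof.
rewrite /N1 qf_opp; congr (- _).
rewrite /qf !mulmxA -(mulmxA (v^T *m e0)) mx11_mul ve0; congr (_ * _).
rewrite (_ : (Wm *m g1 i kk)^T *m v = (v^T *m Wm *m g1 i kk)^T); last first.
  by rewrite !trmx_mul trmxK mulmxA.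
rewrite mxE /g1 -colfE //.
- by move=> u w; rewrite linearD /= mulmxDr mulmxDl addE.
- by move=> c u; rewrite linearZ /= -scalemxAr -scalemxAl scaleE.
Qed.

Lemma qf_N2 i kk v :
  qf (N2 i kk) v = - ((h i)^T *m Av v *m Av v *m ek kk) 0 0.
Proof.
rewrite /N2 qf_opp; congr (- _).
rewrite /qf.
have -> : v^T *m (Wm *m matf (b2 i kk) *m Wm^T) *m v
   = (v^T *m Wm) *m matf (b2 i kk) *m (v^T *m Wm)^T.
  by rewrite trmx_mul trmxK !mulmxA.
rewrite -matfE /b2 //.
- by move=> u1 u2 w; rewrite linearD /= mulmxDr !mulmxDl addE.
- by move=> c u w; rewrite linearZ /= -scalemxAr -!scalemxAl scaleE.
- by move=> u w1 w2; rewrite linearD /= mulmxDr !mulmxDl addE.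
- by move=> c u w; rewrite linearZ /= -scalemxAr -!scalemxAl scaleE.
Qed.

Lemma sum_delta (M : 'M[R]_(1, n)) (x : 'cV[R]_n) :
  \sum_kk x kk 0 * (M *m ek kk) 0 0 = (M *m x) 0 0.
Proof. by rewrite [RHS]mxE; apply: eq_bigr => kk _; rewrite /ek -colE mxE mulrC. Qed.

Definition idx (u : 'I_r + 'I_r) : 'I_r := match u with inl i => i | inr i => i end.
Definition Nt (u : 'I_r + 'I_r) (kk : 'I_n) : 'M[R]_((n * n).+1) :=
  match u with inl i => N1 i kk | inr i => N2 i kk end.
Definition Fm (u : 'I_r + 'I_r) (x : 'cV[R]_n) : 'M[R]_((n * n).+1) :=
  symm (N0 (idx u)) + \sum_kk x kk 0 *: symm (Nt u kk).

Lemma Fm_tr u x : (Fm u x)^T = Fm u x.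
Proof.
rewrite /Fm linearD /= linear_sum /= symm_tr; congr (_ + _).
by apply: eq_bigr => kk _; rewrite linearZ /= symm_tr.
Qed.

Lemma qf_Fm1 i x v : qf (Fm (inl i) x) v =
  b i * v ord0 0 ^+ 2 - v ord0 0 * ((h i)^T *m Av v *m x) 0 0.
Proof.
rewrite /Fm qf_add qf_symm qf_N0 qf_sum /=; congr (_ + _).
rewrite -sum_delta mulr_sumr -sumrN; apply: eq_bigr => kk _.
rewrite qf_scale qf_symm qf_N1; ring.
Qed.

Lemma qf_Fm2 i x v : qf (Fm (inr i) x) v =
  b i * v ord0 0 ^+ 2 - ((h i)^T *m Av v *m Av v *m x) 0 0.
Proof.
rewrite /Fm qf_add qf_symm qf_N0 qf_sum /=; congr (_ + _).
rewrite -sum_delta -sumrN; apply: eq_bigr => kk _.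
rewrite qf_scale qf_symm qf_N2; ring.
Qed.

Definition Cu (u : 'I_r + 'I_r) (x : 'cV[R]_n) : Prop :=
  forall A, in_Uk (quad_fun Q p s) Astar xs A ->
  match u with
  | inl i => ((h i)^T *m (A *m x)) 0 0 <= b i
  | inr i => ((h i)^T *m (A *m (A *m x))) 0 0 <= b i
  end.

Lemma Cu_Fm u x v : v ord0 0 = 1 -> Cu u x -> qf Nq v <= 0 -> 0 <= qf (Fm u x) v.
Proof.
move=> h1 hC hq; rewrite qf_Nq1 // in hq.
have hU := U_Av h1 hq; have := hC _ hU.
case: u {hC} => i.
  by rewrite qf_Fm1 h1 expr1n mulr1 mul1r subr_ge0 mulmxA.
by rewrite qf_Fm2 h1 expr1n mulr1 subr_ge0 !mulmxA.
Qed.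

Lemma Fm_Cu u x l : 0 <= l -> (forall v, 0 <= qf (Fm u x) v + l * qf Nq v) -> Cu u x.
Proof.
move=> hl H A /[dup] hU /inU [hq [z hz]].
have hA := Av_mkv hz.
have h1 := mkv0 z.
have := H (mkv z); rewrite qf_Nq1 // hA => H'.
have : 0 <= qf (Fm u x) (mkv z).
  have : l * quad_fun Q p s A <= 0 by rewrite mulr_ge0_le0.
  lra.
clear H'; move: H; case: u => i _.
  by rewrite qf_Fm1 h1 hA expr1n mulr1 mul1r subr_ge0 mulmxA.
by rewrite qf_Fm2 h1 hA expr1n mulr1 subr_ge0 !mulmxA.
Qed.

Lemma Cu_slam u x : pos_def Q -> (exists v0, v0 ord0 0 = 1 /\ qf Nq v0 < 0) ->
  Cu u x -> 0 <= slam (Fm u x) (symm Nq) /\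
  forall v, 0 <= qf (Fm u x) v + slam (Fm u x) (symm Nq) * qf (symm Nq) v.
Proof.
move=> hQ [v0 [h01 h0]] hC.
apply: slemma; last by exists v0; rewrite qf_symm.
apply: ext_hyp.
- by move=> v h1; rewrite qf_symm; exact: Cu_Fm.
- by move=> w h0'; rewrite qf_symm; exact: qf_Nq0.
- by exists v0; rewrite qf_symm.
Qed.

Lemma U_single : pos_def Q -> quad_fun Q p s Astar <= 0 ->
  (forall v, v ord0 0 = 1 -> 0 <= qf Nq v) ->
  forall A, in_Uk (quad_fun Q p s) Astar xs A -> A = Astar.
Proof.
move=> hQ hAs noS A /inU [hq [z hz]].
set d := z *m Km.
have [hd0|hdne] := eqVneq d 0.
  apply: (can_inj (@mxvecK _ n n)).
  by rewrite hz; move: hd0; rewrite /d => ->; rewrite addr0.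
have := noS (mkv (2^-1 *: z)) (mkv0 _).
rewrite qf_Nq1 ?mkv0 // /Av WE mkv0 scale1r zz_mkv /quad_fun vec_mxK.
rewrite -scalemxAl -/d.
move: hq hAs; rewrite /quad_fun hz.
set a := mxvec Astar.
have E : forall w : 'rV[R]_(n * n), (w *m Q *m w^T) 0 0 = qf Q w^T.
  by move=> w; rewrite /qf trmxK.
rewrite !E.
have -> : (a + 2^-1 *: d)^T = 1 *: a^T + 2^-1 *: d^T by rewrite linearD /= linearZ /= scale1r.
have -> : (a + d)^T = 1 *: a^T + 1 *: d^T by rewrite linearD /= !scale1r.
rewrite !qf_lin2 !mulmxDl -!scalemxAl !addE !scaleE.
have hpos : 0 < qf Q d^T by rewrite /qf trmxK; apply: hQ.
set B := bf Q a^T d^T + bf Q d^T a^T.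
have -> : a^T = 1 *: a^T by rewrite scale1r.
rewrite qf_scale_v.
move=> h1 h2 h3.
rewrite !expr1n !mul1r in h1 h2 h3; rewrite expr2 in h3.
have e : (z *m Km *m p) 0 0 = (d *m p) 0 0 by [].
rewrite e in h1; exfalso; clear -h1 h2 h3 hpos; lra.
Qed.

Variable c : 'cV[R]_n.

Lemma E2 : (2 * r = r + r)%N. Proof. by rewrite mul2n addnn. Qed.
Lemma E3 : (3 * r = r + 2 * r)%N. Proof. exact: mulSn. Qed.
Definition sel2 (j : 'I_(2 * r)) : 'I_r + 'I_r := split (cast_ord E2 j).
Definition inv2 (u : 'I_r + 'I_r) : 'I_(2 * r) := cast_ord (esym E2) (unsplit u).
Lemma sel2_inv u : sel2 (inv2 u) = u.
Proof. by rewrite /sel2 /inv2 cast_ordKV unsplitK. Qed.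
Definition sel3 (i : 'I_(3 * r)) : 'I_r + 'I_(2 * r) := split (cast_ord E3 i).
Definition inv3 (u : 'I_r + 'I_(2 * r)) : 'I_(3 * r) := cast_ord (esym E3) (unsplit u).
Lemma sel3_inv u : sel3 (inv3 u) = u.
Proof. by rewrite /sel3 /inv3 cast_ordKV unsplitK. Qed.

Definition PA : SDP R n (3 * r) (2 * r) :=
  @Build_SDP R n (3 * r) (2 * r) (2 * r) (fun _ => (n * n).+1)
    (fun i => match sel3 i with inl i' => (h i')^T | inr _ => 0 end)
    (fun i => match sel3 i with inl _ => 0 | inr j => - delta_mx 0 j end)
    (fun i => match sel3 i with inl i' => b i' | inr _ => 0 end)
    (fun j => symm (N0 (idx (sel2 j))))
    (fun j kk => symm (Nt (sel2 j) kk))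
    (fun j l => if l == j then symm Nq else 0)
    c^T 0.

Lemma lmiA j x y : @sdp_lmi R n (3 * r) (2 * r) PA j x y = Fm (sel2 j) x + y j 0 *: symm Nq.
Proof.
rewrite /sdp_lmi /= /Fm; congr (_ + _).
rewrite (bigD1 j) //= eqxx big1 ?addr0 // => l /negbTE ->; exact: scaler0.
Qed.

Lemma caseA : pos_def Q -> (exists v0, v0 ord0 0 = 1 /\ qf Nq v0 < 0) ->
  (forall j : 'I_(2 * r), (sdp_m PA j <= n * n + 1)%N) /\
  sdp_reformulates PA c (robust_feasible h b (quad_fun Q p s) Astar xs).
Proof.
move=> hQ hS; split; first by move=> j /=; rewrite addn1.
split; first by []. split; first by [].
move=> x; split.
- move=> [hx hR].
  have hC : forall u, Cu u x.
    by case=> i A hA; have [h1 h2] := hR A hA; [exact: h1 i | exact: h2 i].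
  exists (\col_j slam (Fm (sel2 j) x) (symm Nq)); split.
  + move=> i /=; case: (sel3 i) => [i'|j].
      by rewrite mul0mx zeroE addr0; exact: hx i'.
    by rewrite mul0mx zeroE mulNmx -rowE oppE !mxE add0r oppr_le0 /slam le_max lexx.
  + move=> j; rewrite /psd lmiA; split.
      by rewrite linearD /= linearZ /= Fm_tr symm_tr.
    move=> v; have [_ hv] := Cu_slam hQ hS (hC (sel2 j)).
    by rewrite -/(qf _ v) qf_add qf_scale mxE; exact: hv v.
- move=> [y [hI hL]]; split.
    move=> i; have := hI (inv3 (inl i)).
    by rewrite /= sel3_inv /= mul0mx zeroE addr0.
  have key : forall u, Cu u x.
    move=> u; apply: (@Fm_Cu u x (y (inv2 u) 0)).
      have := hI (inv3 (inr (inv2 u))).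
      by rewrite /= sel3_inv /= mul0mx zeroE mulNmx -rowE oppE !mxE add0r oppr_le0.
    move=> v; have := (hL (inv2 u)).2 v.
    by rewrite -/(qf _ v) lmiA sel2_inv qf_add qf_scale qf_symm.
  by move=> A hA; split=> i; [exact: key (inl i) A hA | exact: key (inr i) A hA].
Qed.

Lemma psd0 (M : 'M[R]_0) : psd M.
Proof. by split; [apply/matrixP => -[] | move=> v; rewrite mxE big_ord0]. Qed.

Definition PB : SDP R n (3 * r) (2 * r) :=
  @Build_SDP R n (3 * r) (2 * r) 0 (fun _ => 0%N)
    (fun i => match sel3 i with
              | inl i' => (h i')^T
              | inr j => match sel2 j with
                         | inl i' => (h i')^T *m Astar
                         | inr i' => (h i')^T *m Astar *m Astar end end)
    (fun _ => 0)
    (fun i => match sel3 i with inl i' => b i' | inr j => b (idx (sel2 j)) end)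
    (fun _ => 0) (fun _ _ => 0) (fun _ _ => 0)
    c^T 0.

Lemma caseB : pos_def Q -> quad_fun Q p s Astar <= 0 ->
  (forall v, v ord0 0 = 1 -> 0 <= qf Nq v) ->
  (forall j : 'I_(2 * r), (sdp_m PB j <= n * n + 1)%N) /\
  sdp_reformulates PB c (robust_feasible h b (quad_fun Q p s) Astar xs).
Proof.
move=> hQ hAs noS; split; first by [].
split; first by []. split; first by [].
have hU := U_single hQ hAs noS.
have hAU : in_Uk (quad_fun Q p s) Astar xs Astar by split.
move=> x; split.
- move=> [hx hR]; exists 0; split; last by move=> j; exact: psd0.
  move=> i /=; rewrite mul0mx zeroE addr0.
  case: (sel3 i) => [i'|j]; first exact: hx i'.
  have [h1 h2] := hR _ hAU.
  case: (sel2 j) => i' /=.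
    by have := h1 i'; rewrite mulmxA.
  by have := h2 i'; rewrite !mulmxA.
- move=> [y [hI _]]; split.
    move=> i; have := hI (inv3 (inl i)).
    by rewrite /= sel3_inv /= mul0mx zeroE addr0.
  move=> A /hU ->; split=> i.
    have := hI (inv3 (inr (inv2 (inl i)))).
    by rewrite /= sel3_inv /= sel2_inv /= mul0mx zeroE addr0 mulmxA.
  have := hI (inv3 (inr (inv2 (inr i)))).
  by rewrite /= sel3_inv /= sel2_inv /= mul0mx zeroE addr0 !mulmxA.
Qed.

Lemma mainSec : pos_def Q -> quad_fun Q p s Astar <= 0 ->
  exists P : SDP R n (3 * r) (2 * r),
    (forall j : 'I_(2 * r), (sdp_m P j <= n * n + 1)%N) /\
    sdp_reformulates P c (robust_feasible h b (quad_fun Q p s) Astar xs).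
Proof.
move=> hQ hAs.
case: (pselect (exists v0, v0 ord0 0 = 1 /\ qf Nq v0 < 0)) => hS.
  by exists PA; exact: caseA.
exists PB; apply: caseB => // v h1.
rewrite leNgt; apply/negP => hlt; apply: hS; by exists v.
Qed.

End App.

Theorem theorem9 (R : realType) (n r k : nat)
    (h : 'I_r -> 'cV[R]_n) (b : 'I_r -> R)
    (Q : 'M[R]_(n * n)) (p : 'cV[R]_(n * n)) (s : R)
    (hQ : pos_def Q)
    (Astar : 'M[R]_n) (hAstar : quad_fun Q p s Astar <= 0)
    (xs : 'I_k -> 'cV[R]_n) (c : 'cV[R]_n) :
  exists P : SDP R n (3 * r) (2 * r),
    (forall j : 'I_(2 * r), (sdp_m P j <= n * n + 1)%N) /\
    sdp_reformulates P c
      (robust_feasible h b (quad_fun Q p s) Astar xs).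
Proof. exact: mainSec hQ hAstar. Qed.
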